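(* Let $n\ge 2k\ge 1$, and let $w$ be a weighted $k$-uniform hypergraph on a vertex set $V$ with $|V|=n$, with $W$-vector $(W_0,\ldots,W_k)$. Fix a sequence $x_1,y_1,\ldots,x_k,y_k$ of $2k$ distinct vertices of $V$, and for $0\le i\le k$ define $\phi_i,\phi_i^*:V^{(k)}\to\mathbb{R}$ by $\phi_i(A)=(-1)^{|A\cap\{y_1,\ldots,y_i\}|}$ if $|A\cap\{x_j,y_j\}|=1$ for all $j=1,\ldots,i$, and $\phi_i(A)=0$ otherwise, and $\phi_i^*=\phi_i/\binom{n-2i}{k-i}$. Then for every $0\le i\le k$, $$W_i=\mathbb{E}_\pi|\langle w_\pi,\phi_i^*\rangle|,$$ where $\pi$ is a uniformly random permutation of $V$.
   Context: $V^{(k)}$ is the family of $k$-subsets of $V$; a weighted $k$-uniform hypergraph on $V$ is a function $w:V^{(k)}\to\mathbb{R}$; $w(S)=\sum_{e\in S^{(k)}}w(e)$; $\langle w,u\rangle=\sum_{e\in V^{(k)}}w(e)u(e)$; $w_\pi(e)=w(\pi^{-1}(e))$. In particular $\phi_0$ is the constant function $1$. $W$-vector (defined recursively on $k$): $W_0=|w(V)|/\binom nk$ (for $k=0$, $w$ is a single real number and $W_0=|w|$). For $k\ge1$ and distinct $x,y\in V$, $w^{xy}:(V\setminus\{x,y\})^{(k-1)}\to\mathbb{R}$ is $w^{xy}(e)=w(e\cup\{x\})-w(e\cup\{y\})$; with $(W^{xy}_0,\ldots,W^{xy}_{k-1})$ its $W$-vector, $W_i=\frac{1}{n(n-1)}\sum_{(x,y):\,x\ne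 y}W^{xy}_{i-1}$ for $1\le i\le k$ (average over ordered pairs of distinct vertices). *)

(* Defs.v *)
From mathcomp Require Import all_boot all_order all_algebra all_fingroup.
Set Implicit Arguments. Unset Strict Implicit. Unset Printing Implicit Defensive.
Import Order.TTheory GRing.Theory Num.Theory.
Local Open Scope ring_scope.

Section Defs.
Variables (R : realFieldType) (T : finType).

(* A weighted k-uniform hypergraph on a vertex set U : {set T} is represented
   by a function w : {set T} -> R; only its values on k-subsets of U matter. *)

Definition total_weight (k : nat) (U : {set T}) (w : {set T} -> R) : R :=
  \sum_(e : {set T} | (e \subset U) && (#|e| == k)) w e.

Definition wxy (w : {set T} -> R) (x y : T) : {set T} -> R :=
  fun e => w (x |: e) - w (y |: e).

Fixpoint Wv (k : nat) (U : {set T}) (w : {set T} -> R) (i : nat) {struct k} : R :=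
  match i with
  | 0 => `|total_weight k U w| / ('C(#|U|, k))%:R
  | i'.+1 =>
    match k with
    | 0 => 0
    | k'.+1 =>
      (\sum_(x in U) \sum_(y in U | y != x) Wv k' (U :\ x :\ y) (wxy w x y) i')
        / (#|U| * (#|U| - 1))%:R
    end
  end.

Definition hdot (k : nat) (w u : {set T} -> R) : R :=
  \sum_(e : {set T} | #|e| == k) w e * u e.

Definition hperm (w : {set T} -> R) (p : {perm T}) : {set T} -> R :=
  fun e => w ((p^-1)%g @: e).

(* phi_i for the sequence x_1,y_1,...,x_k,y_k (given as x, y : 'I_k -> T,
   with index j : 'I_k standing for j+1). *)
Definition phi (k : nat) (x y : 'I_k -> T) (i : nat) : {set T} -> R :=
  fun A =>
    if [forall j : 'I_k, (j < i)%N ==> (#|A :&: [set x j; y j]| == 1%N)]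
    then (-1) ^+ #|A :&: [set y j | j in 'I_k & (j < i)%N]|
    else 0.

Definition phistar (k : nat) (x y : 'I_k -> T) (i : nat) : {set T} -> R :=
  fun A => phi x y i A / ('C(#|T| - 2 * i, k - i))%:R.

End Defs.

(* Main.v *)
Require Import Defs.
From mathcomp Require Import all_boot all_order all_algebra all_fingroup.
From mathcomp Require Import zify.
From mathcomp.algebra_tactics Require Import ring.
Set Implicit Arguments. Unset Strict Implicit. Unset Printing Implicit Defensive.
Import Order.TTheory GRing.Theory Num.Theory.
Local Open Scope ring_scope.

Section Aux.
Variable T : finType.

Fixpoint okU (U : {set T}) (s : seq (T * T)) : bool :=
  match s with
  | [::] => true
  | ab :: s' => [&& ab.1 \in U, ab.2 \in U, ab.2 != ab.1 & okU (U :\ ab.1 :\ ab.2) s']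
  end.

Fixpoint Urem (U : {set T}) (s : seq (T * T)) : {set T} :=
  match s with
  | [::] => U
  | ab :: s' => Urem (U :\ ab.1 :\ ab.2) s'
  end.

Lemma TS (V : Type) (idx : V) (op : Monoid.com_law idx) (i : nat) (U : {set T})
  (H : (i.+1).-tuple (T * T) -> V) :
  \big[op/idx]_(t : (i.+1).-tuple (T*T) | okU U t) H t =
  \big[op/idx]_(a in U) \big[op/idx]_(b in U | b != a)
     \big[op/idx]_(t : i.-tuple (T*T) | okU (U :\ a :\ b) t) H [tuple of (a, b) :: t].
Proof.
rewrite (reindex (fun u : (T * T) * i.-tuple (T * T) => [tuple of u.1 :: u.2])) /=; last first.
  exists (fun t : (i.+1).-tuple (T*T) => (thead t, [tuple of behead t])).
    by move=> [ab t] _ /=; congr (_, _); apply: val_inj.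
  move=> t _ /=; apply: val_inj => /=; case: t => [[|h s] //=].
transitivity (\big[op/idx]_(ab : T*T) \big[op/idx]_(t : i.-tuple (T*T) | okU U (ab::t))
   H [tuple of ab :: t]).
  by rewrite pair_big_dep.
transitivity (\big[op/idx]_(a : T) \big[op/idx]_(b : T) \big[op/idx]_(t : i.-tuple (T*T) | okU U ((a,b)::t))
   H [tuple of (a,b) :: t]).
  by rewrite pair_big /=; apply: eq_bigr => -[a b].
rewrite [RHS]big_mkcond /=; apply: eq_bigr => a _.
case: (boolP (a \in U)) => aU /=; last by apply: big1 => b _; rewrite big_pred0.
rewrite [RHS]big_mkcond /=; apply: eq_bigr => b _.
case: (boolP (b \in U)) => bU /=; last by rewrite big_pred0.
by case: (boolP (b != a)) => ba //=; rewrite big_pred0.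
Qed.


Fixpoint Iter (R : realFieldType) (s : seq (T * T)) (w : {set T} -> R) : {set T} -> R :=
  match s with
  | [::] => w
  | ab :: s' => Iter s' (wxy w ab.1 ab.2)
  end.

Fixpoint Pf (n i : nat) : nat :=
  match i with 0 => 1%N | i'.+1 => (n * (n - 1) * Pf (n - 2) i')%N end.

Lemma card2 (U : {set T}) a b : a \in U -> b \in U -> b != a -> #|U :\ a :\ b| = (#|U| - 2)%N.
Proof.
move=> aU bU ba; rewrite (cardsD1 a U) aU (cardsD1 b (U :\ a)) !inE ba bU /=.
by rewrite add1n add1n subn2.
Qed.

Lemma L1 (R : realFieldType) i : forall k U (w : {set T} -> R), (i <= k)%N ->
  Wv k U w i = (\sum_(t : i.-tuple (T*T) | okU U t)
     `|total_weight (k - i) (Urem U t) (Iter t w)| / ('C(#|U| - 2 * i, k - i))%:R)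
     / (Pf #|U| i)%:R.
Proof.
elim: i => [|i IH] k U w hik.
  rewrite /= (big_pred1 [tuple]) /=; last by move=> t; rewrite [t]tuple0 /=; symmetry; apply/eqP.
  by rewrite muln0 !subn0 divr1; case: k {hik}.
case: k hik => [//|k] hik /=.
rewrite TS /=.
have -> : ((#|U| * (#|U| - 1) * Pf (#|U| - 2) i)%N%:R : R)^-1 =
   ((Pf (#|U| - 2) i)%:R)^-1 * ((#|U| * (#|U| - 1))%N%:R)^-1.
  by rewrite [in LHS]natrM invfM mulrC.
rewrite mulrA; congr (_ * _).
rewrite mulr_suml; apply: eq_bigr => a aU.
rewrite mulr_suml; apply: eq_big => // b /andP [bU ba].
rewrite IH // card2 //; congr (_ / _); apply: eq_bigr => t _.
by rewrite subSS; congr (_ / ('C(_, _))%:R); rewrite mulnS -subnDA add2n.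
Qed.


Definition good (s : seq (T * T)) (A : {set T}) : bool :=
  all (fun ab : T * T => #|A :&: [set ab.1; ab.2]| == 1%N) s.
Definition Ys (s : seq (T * T)) : {set T} := [set z | z \in map snd s].
Definition cf (R : realFieldType) (s : seq (T * T)) (A : {set T}) : R :=
  if good s A then (-1) ^+ #|A :&: Ys s| else 0.
Definition D (R : realFieldType) (U : {set T}) (k : nat) (w : {set T} -> R) s : R :=
  \sum_(A : {set T} | (A \subset U) && (#|A| == k)) cf R s A * w A.

Lemma okU_in (U : {set T}) (s : seq (T * T)) (ab : T * T) : okU U s -> ab \in s -> (ab.1 \in U) && (ab.2 \in U).
Proof.
elim: s U => [//|[a b] s IH] U /= /and4P [aU bU ba ok].
rewrite inE => /orP [/eqP -> /=|abs]; first by rewrite aU bU.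
by have /andP [h1 h2] := IH _ ok abs; move: h1 h2; rewrite !inE => /and3P [_ _ ->] /and3P [_ _ ->].
Qed.

Lemma split1 (R : realFieldType) (U : {set T}) (a b : T) (k : nat) (F : {set T} -> R) : a \in U -> b \in U -> a != b ->
  \sum_(A : {set T} | ((A \subset U) && (#|A| == k.+1) && (a \in A)) && ~~ (b \in A)) F A =
  \sum_(B : {set T} | (B \subset U :\ a :\ b) && (#|B| == k)) F (a |: B).
Proof.
move=> aU bU ab.
rewrite (reindex_onto (fun B => a |: B) (fun A => A :\ a)); last first.
  by move=> A /andP [/andP [_ aA] _]; rewrite setD1K.
apply: eq_bigl => B.
have ba : (b == a) = false by apply/negbTE; rewrite eq_sym.
rewrite !subsetD1 subUset sub1set aU cardsU1 !in_setU1 eqxx ba /=.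
case: (boolP (a \in B)) => aB /=.
  have -> : ((a |: B) :\ a == B) = false.
    by apply/negbTE; apply/negP => /eqP h; have := setD11 a (a |: B); rewrite h aB.
  by rewrite !andbF.
by rewrite setU1K // eqxx andbT add1n eqSS; case: (B \subset U); case: (b \in B); case: (#|B| == k).
Qed.


Lemma good_U1 (s : seq (T * T)) (c : T) (B : {set T}) :
  (forall ab, ab \in s -> (c != ab.1) && (c != ab.2)) -> good s (c |: B) = good s B.
Proof.
move=> H; apply: eq_in_all => ab /H /andP [c1 c2] /=.
suff -> : (c |: B) :&: [set ab.1; ab.2] = B :&: [set ab.1; ab.2] by [].
apply/setP => z; rewrite !inE; have [->|zc] := eqVneq z c; last by [].
by rewrite (negbTE c1) (negbTE c2) !andbF.
Qed.

Lemma Ys_cons (a b : T) (s : seq (T * T)) : Ys ((a, b) :: s) = b |: Ys s.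
Proof. by apply/setP => z; rewrite !inE. Qed.

Lemma Dstep (R : realFieldType) (U : {set T}) (k : nat) (w : {set T} -> R) (a b : T) (s : seq (T * T)) :
  a \in U -> b \in U -> b != a -> okU (U :\ a :\ b) s ->
  D U k.+1 w ((a, b) :: s) = D (U :\ a :\ b) k (wxy w a b) s.
Proof.
move=> aU bU ba ok.
have ab : a != b by rewrite eq_sym.
have Hs : forall ab', ab' \in s -> [&& a != ab'.1, a != ab'.2, b != ab'.1 & b != ab'.2].
  move=> ab' /(okU_in ok); rewrite !inE => /andP [/and3P [h1 h2 _] /and3P [h3 h4 _]].
  by rewrite ![a == _]eq_sym ![b == _]eq_sym h1 h2 h3 h4.
have aY : a \notin Ys s.
  by rewrite inE; apply/mapP => -[ab' /Hs /and4P [_ h _ _] e]; rewrite e eqxx in h.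
have bY : b \notin Ys s.
  by rewrite inE; apply/mapP => -[ab' /Hs /and4P [_ _ _ h] e]; rewrite e eqxx in h.
have aY' : (a \in [seq ab'.2 | ab' <- s]) = false by apply/negbTE; move: aY; rewrite inE.
have bY' : (b \in [seq ab'.2 | ab' <- s]) = false by apply/negbTE; move: bY; rewrite inE.
have ga : forall B, good s (a |: B) = good s B.
  by move=> B; apply: good_U1 => ab' /Hs /and4P [-> -> _ _].
have gb : forall B, good s (b |: B) = good s B.
  by move=> B; apply: good_U1 => ab' /Hs /and4P [_ _ -> ->].
rewrite /D /wxy.
under [RHS]eq_bigr do rewrite mulrBr.
rewrite sumrB.
rewrite (bigID (fun A : {set T} => a \in A)) /=.
rewrite [X in X + _](bigID (fun A : {set T} => b \in A)) /=.
rewrite [X in _ + X](bigID (fun A : {set T} => b \in A)) /=.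
rewrite big1 ?add0r; last first.
  move=> A /andP [/andP [_ aA] bA]; rewrite /cf /=.
  suff -> : A :&: [set a; b] = [set a; b] by rewrite cards2 ab /= mul0r.
  apply/setP => z; rewrite !inE; have [->|za] := eqVneq z a; first by rewrite aA.
  by have [->|zb] := eqVneq z b; rewrite ?bA ?andbF.
rewrite [X in _ + (_ + X)]big1 ?addr0; last first.
  move=> A /andP [/andP [_ aA] bA]; rewrite /cf /=.
  suff -> : A :&: [set a; b] = set0 by rewrite cards0 /= mul0r.
  apply/setP => z; rewrite !inE; have [->|za] := eqVneq z a; first by rewrite (negbTE aA).
  by have [->|zb] := eqVneq z b; rewrite ?(negbTE bA) ?andbF.
congr (_ + _).
  rewrite split1 //; apply: eq_bigr => B /andP [hB _].
  move: hB; rewrite !subsetD1 => /andP [/andP [_ aB] bB].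
  congr (_ * _); rewrite /cf /= ga.
  have -> : (a |: B) :&: [set a; b] = [set a].
    apply/setP => z; rewrite !inE; have [->|za] := eqVneq z a; first by [].
    by have [->|zb] := eqVneq z b; rewrite ?(negbTE bB) ?andbF.
  rewrite cards1 /= Ys_cons.
  suff -> : (a |: B) :&: (b |: Ys s) = B :&: Ys s by [].
  apply/setP => z; rewrite !inE; have [->|za] := eqVneq z a.
    by rewrite (negbTE aB) (negbTE ab) aY'.
  by have [->|zb] := eqVneq z b; rewrite ?(negbTE bB) ?(negbTE zb) ?andbF.
rewrite (eq_bigl (fun A : {set T} => ((A \subset U) && (#|A| == k.+1) && (b \in A)) && ~~ (a \in A))); last first.
  by move=> A; case: (A \subset U); case: (#|A| == k.+1); case: (a \in A); case: (b \in A).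
have -> : U :\ a :\ b = U :\ b :\ a.
  by apply/setP => z; rewrite !inE; case: (z == a); case: (z == b).
rewrite split1 // -sumrN; apply: eq_bigr => B /andP [hB _].
move: hB; rewrite !subsetD1 => /andP [/andP [_ bB] aB].
rewrite -mulNr; congr (_ * _); rewrite /cf /= gb.
have -> : (b |: B) :&: [set a; b] = [set b].
  apply/setP => z; rewrite !inE; have [->|zb] := eqVneq z b; first by rewrite orbT.
  by have [->|za] := eqVneq z a; rewrite ?(negbTE aB) ?(negbTE za) ?andbF.
rewrite cards1 /= Ys_cons.
have -> : (b |: B) :&: (b |: Ys s) = b |: (B :&: Ys s).
  apply/setP => z; rewrite !inE; have [->|zb] := eqVneq z b; first by [].
  by [].
rewrite cardsU1 inE (negbTE bB) /= add1n exprS mulN1r.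
by case: (good s B); rewrite ?oppr0.
Qed.


Lemma C2 (R : realFieldType) (s : seq (T * T)) : forall (U : {set T}) k (w : {set T} -> R),
  okU U s -> (size s <= k)%N ->
  D U k w s = total_weight (k - size s) (Urem U s) (Iter s w).
Proof.
elim: s => [|[a b] s IH] U k w /=.
  move=> _ _; rewrite subn0 /D /total_weight; apply: eq_bigr => A _.
  rewrite /cf /=.
  have -> : Ys [::] = set0 by apply/setP => z; rewrite !inE.
  by rewrite setI0 cards0 expr0 mul1r.
move=> /and4P [aU bU ba ok]; case: k => [//|k] hk.
by rewrite Dstep // IH.
Qed.

Lemma okU_map (m : nat) (u v : 'I_m -> T) (s : seq 'I_m) : injective u -> injective v ->
  (forall j j', u j != v j') -> forall U : {set T}, uniq s -> (forall j, j \in s -> (u j \in U) && (v j \in U)) ->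
  okU U (map (fun j => (u j, v j)) s).
Proof.
move=> iu iv uv; elim: s => [//|j s IH] U /= /andP [js us] H.
have /andP [uU vU] := H j (mem_head _ _).
rewrite uU vU /= eq_sym uv /=; apply: IH => // j' j's.
have /andP [uU' vU'] := H j' (mem_behead (s := j :: s) j's).
have jj : j' != j by apply: contraNneq js => <-.
rewrite !inE uU' vU' !andbT.
by rewrite (inj_eq iu) jj (uv j' j) (inj_eq iv) jj (eq_sym _ (u j)) (uv j j').
Qed.

Lemma Pf_fact n i : (2 * i <= n)%N -> (Pf n i * (n - 2 * i)`!)%N = n`!.
Proof.
elim: i n => [|i IH] n /=; first by rewrite muln0 subn0 mul1n.
move=> hn; have e : (n - 2 * i.+1 = n - 2 - 2 * i)%N by lia.
rewrite e -mulnA IH; last by lia.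
case: n hn {e} => [|[|n]] hn; try lia.
by rewrite !factS subn1 /= subn2 /= mulnA.
Qed.

Lemma card_ok (m : nat) : forall (U : {set T}), (\sum_(t : m.-tuple (T * T) | okU U t) 1)%N = Pf #|U| m.
Proof.
elim: m => [|m IH] U /=.
  by rewrite (big_pred1 [tuple]) // => t; rewrite [t]tuple0 /=; symmetry; apply/eqP.
rewrite TS.
transitivity (\sum_(a in U) ((#|U| - 1) * Pf (#|U| - 2) m))%N; last first.
  by rewrite sum_nat_const mulnA.
apply: eq_bigr => a aU.
transitivity (\sum_(b in U | b != a) Pf (#|U| - 2) m)%N.
  by apply: eq_bigr => b /andP [bU ba]; rewrite IH card2.
rewrite sum_nat_const; congr (_ * _)%N.
rewrite -cardsE (cardsD1 a [set x in U | x != a]) !inE eqxx andbF add0n.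
rewrite (cardsD1 a U) aU add1n subn1 /=; apply: eq_card => z.
by rewrite !inE; case: (z == a); case: (z \in U).
Qed.


Section Perm.
Variables (m : nat) (u v : 'I_m -> T).
Hypotheses (iu : injective u) (iv : injective v) (uv : forall j j', u j != v j').

Definition G (p : {perm T}) : m.-tuple (T * T) :=
  [tuple ((p^-1)%g (u j), (p^-1)%g (v j)) | j < m].

Lemma okG p : okU setT (G p).
Proof.
rewrite /G /=.
apply: (okU_map (u := fun j => (p^-1)%g (u j)) (v := fun j => (p^-1)%g (v j))).
- by move=> j j' /perm_inj /iu.
- by move=> j j' /perm_inj /iv.
- by move=> j j'; rewrite (inj_eq perm_inj).
- exact: enum_uniq.
- by move=> j _; rewrite !in_setT.
Qed.

Definition X : {set T} := [set u j | j : 'I_m] :|: [set v j | j : 'I_m].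

Lemma cardX : #|X| = (2 * m)%N.
Proof.
rewrite /X cardsU !card_imset // card_ord.
suff -> : [set u j | j : 'I_m] :&: [set v j | j : 'I_m] = set0 by rewrite cards0 subn0 mul2n addnn.
apply/setP => z; rewrite !inE; apply/negbTE/negP => /andP [/imsetP [j _ ->] /imsetP [j' _ e]].
by move: (uv j j'); rewrite e eqxx.
Qed.

Lemma m2n : (2 * m <= #|T|)%N.
Proof. by rewrite -cardX max_card. Qed.

Lemma fib p0 : #|[set p | G p == G p0]| = (#|T| - 2 * m)`!.
Proof.
pose H := [set q : {perm T} | perm_on (~: X) q].
have cH : #|H| = (#|T| - 2 * m)`!.
  rewrite cardsE card_perm; congr (_`!).
  by have := cardsC X; rewrite cardX => <-; rewrite addKn.
rewrite -cH -(card_imset H (mulgI p0)); apply: eq_card => p.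
rewrite !inE; apply/idP/imsetP.
- move=> /eqP E; exists (p0^-1 * p)%g; last by rewrite mulKVg.
  rewrite inE; apply/subsetP => z; rewrite !inE; apply: contraNN => zX.
  rewrite permM; apply/eqP.
  case/orP: zX => /imsetP [j _ ->].
  + have := congr1 (fun t => tnth t j) E; rewrite !tnth_mktuple => -[e1 _].
    by rewrite -e1 permKV.
  + have := congr1 (fun t => tnth t j) E; rewrite !tnth_mktuple => -[_ e2].
    by rewrite -e2 permKV.
- move=> [q]; rewrite inE => hq ->; apply/eqP/eq_from_tnth => j; rewrite !tnth_mktuple.
  have hq' := perm_onV hq.
  rewrite invMg !permM !(out_perm hq') // !inE negbK; apply/orP.
    by right; apply/imsetP; exists j.
  by left; apply/imsetP; exists j.
Qed.

Lemma fib_le (t : m.-tuple (T * T)) : (#|[set p | G p == t]| <= (#|T| - 2 * m)`!)%N.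
Proof.
case: (set_0Vmem [set p | G p == t]) => [->|[p0]]; first by rewrite cards0.
by rewrite inE => /eqP <-; rewrite fib.
Qed.

Lemma fib_eq (t : m.-tuple (T * T)) : okU setT t -> #|[set p | G p == t]| = (#|T| - 2 * m)`!.
Proof.
move=> okt.
have hsum : (\sum_(t : m.-tuple (T * T) | okU setT t) #|[set p | G p == t]|)%N =
            (\sum_(t : m.-tuple (T * T) | okU setT t) (#|T| - 2 * m)`!)%N.
  transitivity #|{perm T}|.
    rewrite -sum1_card (partition_big G (okU setT)) /=; last by move=> p _; exact: okG.
    by apply: eq_bigr => t' _; rewrite sum1dep_card; apply: eq_card => p; rewrite !inE.
  have -> : (\sum_(t : m.-tuple (T * T) | okU setT t) (#|T| - 2 * m)`!)%N =
     ((\sum_(t : m.-tuple (T * T) | okU setT t) 1) * (#|T| - 2 * m)`!)%N.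
    by rewrite big_distrl /=; apply: eq_bigr => t' _; rewrite mul1n.
  rewrite card_ok cardsT Pf_fact ?m2n //.
  rewrite -cardsT -card_perm; apply: eq_card => p; rewrite inE.
  by apply/esym/subsetP => z _; rewrite in_setT.
have [_] := leqif_sum (fun (t : m.-tuple (T * T)) (_ : okU setT t) => leqif_eq (fib_le t)).
rewrite hsum eqxx => /esym /forall_inP H.
exact/eqP/H.
Qed.

Lemma count (R : realFieldType) (F : m.-tuple (T * T) -> R) :
  \sum_(p : {perm T}) F (G p) =
  ((#|T| - 2 * m)`!)%:R * \sum_(t : m.-tuple (T * T) | okU setT t) F t.
Proof.
rewrite (partition_big G (okU setT)) /=; last by move=> p _; exact: okG.
rewrite mulr_sumr; apply: eq_bigr => t okt.
rewrite (eq_bigr (fun _ => F t)); last by move=> p /eqP ->.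
rewrite (eq_bigl (fun p => p \in [set p | G p == t])); last by move=> p; rewrite inE.
by rewrite sumr_const fib_eq // mulr_natl.
Qed.

End Perm.

Lemma permIK (p : {perm T}) (A : {set T}) : (p^-1)%g @: (p @: A) = A.
Proof.
rewrite -imset_comp (eq_imset (g := id)) ?imset_id // => z /=.
by rewrite permK.
Qed.

Lemma cardI_perm (p : {perm T}) (A S : {set T}) : #|p @: A :&: S| = #|A :&: (p^-1)%g @: S|.
Proof.
rewrite -[in RHS](permIK p A) -imsetI; last by move=> a b _ _; apply: perm_inj.
by rewrite card_imset //; apply: perm_inj.
Qed.

Lemma C1 (R : realFieldType) (k i : nat) (hik : (i <= k)%N) (x y : 'I_k -> T) (w : {set T} -> R) (p : {perm T}) :
  hdot k (hperm w p) (phi R x y i) =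
  D setT k w (G (fun j : 'I_i => x (widen_ord hik j)) (fun j : 'I_i => y (widen_ord hik j)) p).
Proof.
rewrite /hdot /D (reindex (fun A : {set T} => p @: A)); last first.
  exists (fun e : {set T} => (p^-1)%g @: e) => A _; first by rewrite permIK.
  by rewrite -{1}[p]invgK permIK.
apply: eq_big => [A|A _].
  by rewrite subsetT card_imset //; apply: perm_inj.
rewrite /hperm permIK mulrC; congr (_ * _).
rewrite /phi /cf /good /G /= all_map.
have -> : [forall j : 'I_k, (j < i)%N ==> (#|p @: A :&: [set x j; y j]| == 1%N)] =
   all (fun j : 'I_i => #|A :&: [set (p^-1)%g (x (widen_ord hik j)); (p^-1)%g (y (widen_ord hik j))]| == 1%N)
     (enum 'I_i).
  apply/forallP/allP => /= H j.
    move=> _; have := H (widen_ord hik j); rewrite /= ltn_ord /= cardI_perm.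
    by rewrite imsetU1 imset_set1.
  apply/implyP => ji; have := H (Ordinal ji) (mem_enum _ _).
  rewrite cardI_perm imsetU1 imset_set1.
  by have -> : widen_ord hik (Ordinal ji) = j by apply: val_inj.
case: (all _ _) => //; congr (_ ^+ _).
rewrite cardI_perm; congr #|A :&: _|.
apply/setP => z; rewrite !inE -imset_comp; apply/imsetP/mapP.
- move=> [j]; rewrite inE => ji ->.
  exists ((p^-1)%g (x (widen_ord hik (Ordinal ji))), (p^-1)%g (y (widen_ord hik (Ordinal ji)))).
    by apply/mapP; exists (Ordinal ji); rewrite ?mem_enum.
  by rewrite /=; have -> : widen_ord hik (Ordinal ji) = j by apply: val_inj.
- move=> [ab /mapP [j _ ->] ->] /=.
  by exists (widen_ord hik j); rewrite // inE /= ltn_ord.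
Qed.

End Aux.

Theorem lemma3p1 (R : realFieldType) (T : finType) (k : nat)
  (w : {set T} -> R) (x y : 'I_k -> T) :
  (1 <= 2 * k)%N -> (2 * k <= #|T|)%N ->
  injective x -> injective y -> (forall j j' : 'I_k, x j != y j') ->
  forall i : nat, (i <= k)%N ->
    Wv k [set: T] w i =
    (\sum_(p : {perm T}) `|hdot k (hperm w p) (@phistar R T k x y i)|) / (#|T|`!)%:R.
Proof.
move=> k1 k2 ix iy xy i hik.
set u := fun j : 'I_i => x (widen_ord hik j).
set v := fun j : 'I_i => y (widen_ord hik j).
have iu : injective u by move=> j j' /ix /(congr1 val) /= /val_inj.
have iv : injective v by move=> j j' /iy /(congr1 val) /= /val_inj.
have uv : forall j j', u j != v j' by move=> j j'; apply: xy.
rewrite L1 // cardsT.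
set c := ('C(#|T| - 2 * i, k - i))%:R : R.
set F := fun t : i.-tuple (T * T) => `|total_weight (k - i) (Urem [set: T] t) (Iter t w)| / c.
have E : forall p, `|hdot k (hperm w p) (phistar R x y i)| = F (G u v p).
  move=> p; rewrite /F.
  have -> : hdot k (hperm w p) (phistar R x y i) = hdot k (hperm w p) (phi R x y i) / c.
    by rewrite /hdot mulr_suml; apply: eq_bigr => e _; rewrite /phistar mulrA.
  rewrite C1 C2 ?okG // ?size_tuple //.
  by rewrite normrM normfV [`|c|]ger0_norm // ler0n.
rewrite (eq_bigr (fun p => F (G u v p))); last by move=> p _; rewrite E.
rewrite count // -(Pf_fact (n := #|T|) (i := i)); last by lia.
have f0 : ((#|T| - 2 * i)`!)%:R != 0 :> R by rewrite pnatr_eq0 -lt0n fact_gt0.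
have P0 : (Pf #|T| i)%:R != 0 :> R.
  rewrite pnatr_eq0 -lt0n; have := fact_gt0 #|T|.
  rewrite -(Pf_fact (n := #|T|) (i := i)); last by lia.
  by rewrite muln_gt0 => /andP [].
rewrite /F natrM; field.
by rewrite f0 P0.
Qed.
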